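(* Let $P$ be a countable multiset of primes, $G=\bigoplus_{p\in P}\mathbb{F}_p$, and let $X$ be an ergodic $G$-system. Let $F:X\to S^1$ be a phase polynomial of degree $<k$ taking values in $C_n$, where $n=p_1\cdots p_j$ for primes $p_1,\dots,p_j$ with $k<p_i$ for all $i$. Then for every $g\in G$, $\prod_{t=0}^{n-1}F(T_g^tx)=1$ for a.e. $x\in X$.
   Context: $C_n$ is the group of $n$-th roots of unity. A $G$-system is a compact metrizable probability space with measure-preserving $G$-action $(T_g)$; ergodic: only constants invariant. Phase polynomial of degree $<k$: $\Delta_{h_1}\cdots\Delta_{h_k}F=1$ a.e. for all $h_i\in G$, where $\Delta_h\phi=(\phi\circ T_h)/\phi$. *)

(* Defs.v *)
From HB Require Import structures.
From mathcomp Require Import all_boot all_algebra.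
From mathcomp Require Import all_classical all_reals all_analysis.
From mathcomp Require Import complex.

Set Implicit Arguments.
Unset Strict Implicit.
Unset Printing Implicit Defensive.

Import GRing.Theory Num.Theory.
Local Open Scope ring_scope.
Local Open Scope classical_set_scope.

(* The group G = (+)_{i in I} F_{p i}, for a countable multiset of     *)
(* primes P given as a family p : I -> nat over a countable index type *)
(* I.  An element is a finitely supported g : I -> nat with g i < p i; *)

Section DirectSum.
Variables (I : countType) (p : I -> nat).

Definition in_dsum (g : I -> nat) : Prop :=
  (forall i, (g i < p i)%N) /\ finite_set [set i | g i != 0%N].

Record dsum := Dsum { dval : I -> nat; dvalP : in_dsum dval }.

Lemma dsum_add_proof (g h : dsum) :
  in_dsum (fun i => ((dval g i + dval h i) %% p i)%N).
Proof.
case: g => g [gp gf]; case: h => h [hp hf] /=; split.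
  by move=> i; rewrite ltn_pmod //; apply: leq_ltn_trans (gp i).
apply: (@sub_finite_set _ _ ([set i | g i != 0%N] `|` [set i | h i != 0%N])); last first.
  by rewrite finite_setU; split.
move=> i /= Hi; case: (eqVneq (g i) 0%N) => [g0|gi]; last by left.
right; apply/negP => /eqP h0; move: Hi; by rewrite g0 h0 mod0n.
Qed.

Definition dsum_add (g h : dsum) : dsum := Dsum (dsum_add_proof g h).

Definition dsum_is_zero (g : dsum) : Prop := forall i, dval g i = 0%N.

End DirectSum.

Section Systems.
Variables (I : countType) (p : I -> nat).
Variables (R : realType) (d : measure_display) (X : measurableType d).
Variables (mu : probability X R).

Definition measure_preserving_action (T : dsum p -> X -> X) : Prop :=
  [/\ (forall g, dsum_is_zero g -> T g = id),
      (forall g h, T (dsum_add g h) = T g \o T h),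
      (forall g, measurable_fun setT (T g)) &
      (forall g A, measurable A -> mu (T g @^-1` A) = mu A)].

Definition ergodic (T : dsum p -> X -> X) : Prop :=
  forall f : X -> R, measurable_fun setT f ->
    (forall g, {ae mu, forall x, f (T g x) = f x}) ->
    exists c : R, {ae mu, forall x, f x = c}.

Definition mderiv (T : dsum p -> X -> X) (h : dsum p) (phi : X -> R[i])
  : X -> R[i] := fun x => phi (T h x) / phi x.

Definition mderivs (T : dsum p -> X -> X) (hs : seq (dsum p)) (phi : X -> R[i])
  : X -> R[i] := foldr (mderiv T) phi hs.

Definition circle_measurable (F : X -> R[i]) : Prop :=
  [/\ measurable_fun setT (fun x => complex.Re (F x)),
      measurable_fun setT (fun x => complex.Im (F x)) &
      forall x, `|F x| = 1].

Definition phase_poly_lt (T : dsum p -> X -> X) (k : nat) (F : X -> R[i]) : Prop :=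
  circle_measurable F /\
  forall hs : seq (dsum p), size hs = k ->
    {ae mu, forall x, mderivs T hs F x = 1}.

End Systems.

(* Main.v *)
Require Import Defs.
From HB Require Import structures.
From mathcomp Require Import all_boot all_algebra.
From mathcomp Require Import all_classical all_reals all_analysis.
From mathcomp Require Import complex.
Import GRing.Theory Num.Theory.
Local Open Scope ring_scope.
Set Implicit Arguments.
Set Warnings "-all".
Section Alg.
Variable K : fieldType.
Definition Dseq (u : nat -> K) : nat -> K := fun t => u t.+1 / u t.

Lemma Dseq_nz u : (forall t, u t != 0) -> forall t, Dseq u t != 0.
Proof. by move=> H t; rewrite /Dseq mulf_neq0 // invr_eq0. Qed.

Lemma iterD_nz j u : (forall t, u t != 0) -> forall t, iter j Dseq u t != 0.
Proof. by elim: j => [|j IH] //= H; apply: Dseq_nz; apply: IH. Qed.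

Lemma Dseq_pow N u : (forall t, u t ^+ N = 1) -> forall t, Dseq u t ^+ N = 1.
Proof. by move=> H t; rewrite /Dseq expr_div_n !H divr1. Qed.

Lemma iterD_pow N j u : (forall t, u t ^+ N = 1) -> forall t, iter j Dseq u t ^+ N = 1.
Proof. by elim: j => [|j IH] //= H; apply: Dseq_pow; apply: IH. Qed.

Lemma tele u : (forall t, u t != 0) -> forall t, u t = u 0%N * \prod_(s < t) Dseq u s.
Proof.
move=> H; elim=> [|t IH]; first by rewrite big_ord0 mulr1.
rewrite big_ord_recr /= mulrA -IH /Dseq mulrCA mulfV ?mulr1 //.
Qed.

Lemma hockey t j : (\sum_(s < t) 'C(s, j) = 'C(t, j.+1))%N.
Proof.
elim: t => [|t IH]; first by rewrite big_ord0 bin0n.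
by rewrite big_ord_recr /= IH binS addnC.
Qed.

Lemma newton N k : forall u, (forall t, u t != 0) ->
  (forall t, (t < N)%N -> iter k Dseq u t = 1) ->
  forall t, (t < N)%N -> u t = \prod_(j < k) (iter j Dseq u 0%N) ^+ 'C(t, j).
Proof.
elim: k => [|k IH] u Hnz Hk t Ht.
  by rewrite big_ord0; apply: (Hk t Ht).
have HD : forall s, (s < N)%N -> Dseq u s = \prod_(j < k) (iter j Dseq (Dseq u) 0%N) ^+ 'C(s, j).
  apply: IH; first exact: Dseq_nz.
  by move=> s Hs; rewrite -iterSr; apply: Hk.
rewrite (@tele u Hnz t) big_ord_recl /= bin0 expr1; congr (_ * _).
rewrite (eq_bigr (fun s : 'I_t => \prod_(j < k) (iter j Dseq (Dseq u) 0%N) ^+ 'C(s, j))); last first.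
  by move=> s _; apply: HD; apply: ltn_trans Ht.
rewrite exchange_big /=; apply: eq_bigr => j _.
by rewrite prodrXr hockey -iterSr.
Qed.

Lemma prod_one N k u : (forall t, u t != 0) -> (forall t, u t ^+ N = 1) ->
  (forall m, (m < k)%N -> (N %| 'C(N, m.+1))%N) ->
  (forall t, (t < N)%N -> iter k Dseq u t = 1) ->
  \prod_(t < N) u t = 1.
Proof.
move=> Hnz Hpow Hdiv Hk.
rewrite (eq_bigr (fun t : 'I_N => \prod_(j < k) (iter j Dseq u 0%N) ^+ 'C(t, j))); last first.
  by move=> t _; apply: (@newton N k u Hnz Hk).
rewrite exchange_big /=; apply: big1 => j _.
rewrite prodrXr hockey.
have /dvdnP [q ->] := Hdiv j (ltn_ord j).
by rewrite exprM exprAC (@iterD_pow N j u Hpow) expr1n.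
Qed.

Lemma prime_prod_dvd_bin (k : nat) (qs : seq nat) :
  (forall q, q \in qs -> prime q /\ (k < q)%N) ->
  forall m, (m < k)%N -> (\prod_(q <- qs) q %| 'C(\prod_(q <- qs) q, m.+1))%N.
Proof.
move=> Hqs m Hm.
have cop : coprime (\prod_(q <- qs) q) m.+1.
  elim: qs Hqs => [|q qs IH] Hqs; first by rewrite big_nil coprime1n.
  rewrite big_cons coprimeMl; apply/andP; split; last first.
    by apply: IH => r Hr; apply: Hqs; rewrite inE Hr orbT.
  have [pq kq] := Hqs q (mem_head _ _).
  rewrite prime_coprime //; apply/negP => /dvdn_leq => /(_ isT).
  by rewrite leqNgt (leq_ltn_trans Hm kq).
by rewrite -(Gauss_dvdr _ cop) -mul_bin_diag dvdn_mulr.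
Qed.
End Alg.

Theorem propositionB12
  (I : countType) (p : I -> nat) (Pprime : forall i, prime (p i))
  (R : realType) (d : measure_display) (X : measurableType d)
  (mu : probability X R) (T : dsum p -> X -> X)
  (HT : measure_preserving_action mu T) (Herg : ergodic mu T)
  (k : nat) (qs : seq nat)
  (Hqs : forall q, q \in qs -> prime q /\ (k < q)%N)
  (n : nat) (Hn : n = \prod_(q <- qs) q)
  (F : X -> R[i]) (HF : phase_poly_lt mu T k F)
  (HFn : forall x, F x ^+ n = 1) :
  forall g : dsum p,
    {ae mu, forall x, \prod_(t < n) F (iter t (T g) x) = 1}.
Proof.
Local Open Scope classical_set_scope.
move=> g.
case: HT => _ _ HM HP.
have pres : forall t A, measurable A ->
    measurable (iter t (T g) @^-1` A) /\ mu (iter t (T g) @^-1` A) = mu A.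
  elim=> [|t IH] A mA; first by split.
  have [mA' muA'] := IH _ mA.
  have mB : measurable (T g @^-1` (iter t (T g) @^-1` A)).
    by rewrite -[X in measurable X]setTI; apply: HM.
  have -> : iter t.+1 (T g) @^-1` A = T g @^-1` (iter t (T g) @^-1` A).
    apply/seteqP; split => x; rewrite /preimage /=.
      by rewrite -iterS iterSr.
    by rewrite -iterSr iterS.
  by split; rewrite ?HP.
have shift : forall t (P : X -> Prop), {ae mu, forall x, P x} ->
    {ae mu, forall x, P (iter t (T g) x)}.
  move=> t P [N [mN N0 sub]].
  have [mN' N0'] := pres t N mN.
  exists (iter t (T g) @^-1` N); split => //; first by rewrite N0'.
  by move=> x /= nPx; apply: sub.
have HD : {ae mu, forall x, mderivs T (nseq k g) F x = 1}.
  by apply: HF.2; rewrite size_nseq.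
have Hall : {ae mu, forall x, forall t, mderivs T (nseq k g) F (iter t (T g) x) = 1}.
  by apply: ae_foralln => t; apply: (shift t (fun y => mderivs T (nseq k g) F y = 1)).
apply: filterS Hall => x Hx.
pose u := fun t => F (iter t (T g) x).
have link : forall j t, mderivs T (nseq j g) F (iter t (T g) x) = iter j (@Dseq _) u t.
  elim=> [|j IH] t //=.
  by rewrite /mderiv -iterS !IH.
apply: (@prod_one _ n k u).
- move=> t; apply/negP => /eqP H0.
  have := HF.1; case=> _ _ /(_ (iter t (T g) x)).
  by rewrite -/(u t) H0 normr0 => /eqP; rewrite eq_sym oner_eq0.
- by move=> t; apply: HFn.
- by rewrite Hn; apply: prime_prod_dvd_bin.
- by move=> t _; rewrite -link Hx.
Qed.
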